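(* Let $1\le k\le n$ and let $K$ be a $k$-dimensional vector space. Let $X(k,n)=\{(I,J)\in\mathrm{Hom}(\mathbb{C}^n_x,K)\oplus\mathrm{Hom}^{\mathrm{st}}(K,\mathbb{C}^n_y)\}/GL(K)$ and $X^\vee(k,n)=\{(I,J)\in\mathrm{Hom}^{\mathrm{st}}(\mathbb{C}^n_x,K)\oplus\mathrm{Hom}(K,\mathbb{C}^n_y)\}/GL(K)$, where $\mathrm{Hom}^{\mathrm{st}}$ denotes maps of maximal rank. Then the $\mathbb{C}^\times_q\times T_x\times T_y$-equivariant Hirzebruch genera agree: $$\chi\Big(X(k,n),\sum_i(-t)^i\Omega^i\Big)=\chi\Big(X^\vee(k,n),\sum_i(-t)^i\Omega^i\Big),$$ equivalently, as rational functions, $$\sum_{\substack{I\subset\{1,\dots,n\}\\|I|=k}}\prod_{\substack{i\in I\\ j\notin I}}\frac{1-ty_j/y_i}{1-y_j/y_i}\prod_{\substack{i\in I\\ \ell=1,\dots,n}}\frac{1-tq^{-1}y_i/x_\ell}{1-q^{-1}y_i/x_\ell}=\sum_{\substack{I\subset\{1,\dots,n\}\\|I|=k}}\prod_{\substack{i\in I\\ j\notin I}}\frac{1-tx_i/x_j}{1-x_i/x_j}\prod_{\substack{\ell\in I\\ i=1,\dots,n}}\frac{1-tq^{-1}y_i/x_\ell}{1-q^{-1}y_i/x_\ell}.$$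
   Context: $T_x,T_y$ are maximal tori of $GL(\mathbb{C}^n_x)$, $GL(\mathbb{C}^n_y)$ with coordinates $x_\ell$, $y_i$; $\mathbb{C}^\times_q$ scales $\mathrm{Hom}(\mathbb{C}^n_x,K)$ with weight $+1$ and acts trivially on $\mathrm{Hom}(K,\mathbb{C}^n_y)$. With $\mathscr{K}$ the tautological bundle, the $K$-theory class of the tangent bundle on both spaces is $\mathbb{C}^n_y\otimes\mathscr{K}^*+q\mathscr{K}\otimes(\mathbb{C}^n_x)^*-\mathscr{K}\otimes\mathscr{K}^*$. Torus fixed points on both are indexed by $I\subset\{1,\dots,n\}$, $|I|=k$, with $\mathscr{K}|_I=\sum_{i\in I}y_i^{-1}$ on $X$ and $\mathscr{K}|_I=\sum_{\ell\in I}(qx_\ell)^{-1}$ on $X^\vee$. The Hirzebruch genus $\chi(X,\sum_i(-t)^i\Omega^i_X)$ of these nonproper spaces is defined by equivariant localization as a rational function of $(q,x,y,t)$. *)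

(* Defs.v *)
From mathcomp Require Import all_boot all_order all_algebra.
Set Implicit Arguments. Unset Strict Implicit. Unset Printing Implicit Defensive.
Import GRing.Theory.
Local Open Scope ring_scope.

(* Fixed-point localization formula for the Hirzebruch chi_{-t} genus of X(k,n):
   sum over k-subsets I of {1..n} (fixed points), with
   tangent weights y_j/y_i (i in I, j notin I) and q^{-1} y_i / x_l. *)
Definition chi_X (F : fieldType) (n k : nat) (q t : F) (x y : 'I_n -> F) : F :=
  \sum_(I : {set 'I_n} | #|I| == k)
    ((\prod_(i in I) \prod_(j in ~: I) ((1 - t * y j / y i) / (1 - y j / y i))) *
     (\prod_(i in I) \prod_(l : 'I_n)
        ((1 - t * q^-1 * y i / x l) / (1 - q^-1 * y i / x l)))).

Definition chi_Xdual (F : fieldType) (n k : nat) (q t : F) (x y : 'I_n -> F) : F :=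
  \sum_(I : {set 'I_n} | #|I| == k)
    ((\prod_(i in I) \prod_(j in ~: I) ((1 - t * x i / x j) / (1 - x i / x j))) *
     (\prod_(l in I) \prod_(i : 'I_n)
        ((1 - t * q^-1 * y i / x l) / (1 - q^-1 * y i / x l)))).

(* Main.v *)
Require Import Defs.
From mathcomp Require Import all_boot all_order all_algebra.
From mathcomp Require Import ring.
Set Implicit Arguments. Unset Strict Implicit. Unset Printing Implicit Defensive.
Import GRing.Theory.
Local Open Scope ring_scope.

Ltac fld := field; rewrite ?andbT; try (repeat (apply/andP; split)); try assumption.
Section PF.
Variable L : fieldType.

Lemma PF (X : finType) (c a b : X -> L) (n : nat) (Z : {set X}) (w : L) :
  #|Z| = n ->
  {in Z &, injective b} -> (forall p, p \in Z -> w != b p) ->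
  \prod_(p in Z) ((c p * w - a p)/(w - b p)) =
  \prod_(p in Z) c p + \sum_(r in Z) ((c r * b r - a r)/(w - b r) *
      \prod_(p in Z :\ r) ((c p * b r - a p)/(b r - b p))).
Proof.
elim: n Z w => [|n IH] Z w Hn Hinj Hw.
  move/eqP: Hn; rewrite cards_eq0 => /eqP ->.
  by rewrite !big_set0 addr0.
have : (0 < #|Z|)%N by rewrite Hn.
case/card_gt0P => z Ha.
have Hn' : #|Z :\ z| = n by move: Hn; rewrite (cardsD1 z) Ha => -[].
have Hinj' : {in Z :\ z &, injective b}.
  by move=> p q /setD1P[_ Hp] /setD1P[_ Hq]; apply: Hinj.
have Hw' : forall p, p \in Z :\ z -> w != b p by move=> p /setD1P[_ Hp]; apply: Hw.
have Hba : forall p, p \in Z :\ z -> b z != b p.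
  move=> p /setD1P[Hpa Hp]; apply/eqP => E; move/eqP: Hpa; apply.
  by apply: Hinj => //; rewrite E.
rewrite (big_setD1 z Ha) /= (IH _ w Hn' Hinj' Hw').
rewrite (big_setD1 z Ha) /= (big_setD1 z Ha) /=.
rewrite (IH _ (b z) Hn' Hinj' Hba).
set C := \prod_(p in Z :\ z) c p.
have -> : \sum_(i in Z :\ z) (c i * b i - a i) / (w - b i) *
        \prod_(p in Z :\ i) ((c p * b i - a p) / (b i - b p)) =
   \sum_(i in Z :\ z) ((c i * b i - a i) / (w - b i) *
        \prod_(p in Z :\ z :\ i) ((c p * b i - a p) / (b i - b p))) *
        ((c z * b i - a z) / (b i - b z)).
  apply: eq_bigr => r Hr.
  have Har : z \in Z :\ r.
    by rewrite in_setD1 Ha andbT eq_sym; case/setD1P: Hr.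
  rewrite (big_setD1 z Har) /=. have -> : Z :\ r :\ z = Z :\ z :\ r by rewrite !setDDl setUC. ring.
have Hwa : w - b z != 0 by rewrite subr_eq0; apply: Hw.
rewrite !mulrDr !mulr_sumr.
have E1 : (c z * w - a z) / (w - b z) * C = c z * C + (c z * b z - a z) / (w - b z) * C.
  by field.
set S1 := \sum_(i in Z :\ z) _.
set S2 := \sum_(i in Z :\ z) _.
set S3 := \sum_(i in Z :\ z) _.
have E2 : S1 = S2 + S3.
  rewrite /S1 /S2 /S3 -big_split /=; apply: eq_bigr => r Hr.
  have H1 : w - b r != 0 by rewrite subr_eq0; apply: Hw'.
  have H2 : b z - b r != 0 by rewrite subr_eq0; apply: Hba.
  have H3 : b r - b z != 0 by rewrite subr_eq0 eq_sym; apply: Hba.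
  set P := \prod_(p in _) _. by fld.
rewrite E1 E2; ring.
Qed.
End PF.

From mathcomp Require Import zify.

Definition ff (L : fieldType) (t a b : L) := (a - t * b) / (a - b).

Definition Aterm {R : comNzRingType} {V : Type} {N : nat} (g : V -> V -> R)
  (y u : 'I_N -> V) (S T I : {set 'I_N}) : R :=
  (\prod_(i in I) \prod_(j in S :\: I) g (y i) (y j)) *
  (\prod_(i in I) \prod_(l in T) g (u l) (y i)).
Definition Asum {R : comNzRingType} {V : Type} {N : nat} (g : V -> V -> R)
  (y u : 'I_N -> V) (k : nat) (S T : {set 'I_N}) : R :=
  \sum_(I : {set 'I_N} | (I \subset S) && (#|I| == k)) Aterm g y u S T I.
Definition Bterm {R : comNzRingType} {V : Type} {N : nat} (g : V -> V -> R)
  (y u : 'I_N -> V) (S T M : {set 'I_N}) : R :=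
  (\prod_(l in M) \prod_(j in T :\: M) g (u j) (u l)) *
  (\prod_(l in M) \prod_(i in S) g (u l) (y i)).
Definition Bsum {R : comNzRingType} {V : Type} {N : nat} (g : V -> V -> R)
  (y u : 'I_N -> V) (k : nat) (S T : {set 'I_N}) : R :=
  \sum_(M : {set 'I_N} | (M \subset T) && (#|M| == k)) Bterm g y u S T M.

Section Gen.
Variable R : comNzRingType.
Variable N : nat.

Lemma sum_add1 (A : {set 'I_N}) r k (F : {set 'I_N} -> R) : r \in A ->
  \sum_(I : {set 'I_N} | (I \subset A) && (#|I| == k.+1) && (r \in I)) F I =
  \sum_(J : {set 'I_N} | (J \subset A :\ r) && (#|J| == k)) F (r |: J).
Proof.
move=> Hr.
rewrite (reindex_onto (fun J => r |: J) (fun I => I :\ r)); last first.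
  by move=> I /andP[_ HI]; rewrite setD1K.
apply: eq_bigl => J /=.
rewrite subsetD1 setU11 andbT.
case HrJ: (r \in J) => /=.
  rewrite andbF; apply/negbTE/negP => /andP[_ /eqP E].
  by move: HrJ; rewrite -E setD11.
rewrite setU1K ?HrJ // eqxx andbT cardsU1 HrJ add1n eqSS.
by rewrite subUset sub1set Hr andbT.
Qed.

Lemma exch (P : pred {set 'I_N}) (h : {set 'I_N} -> {set 'I_N}) (A : {set 'I_N})
  (G : {set 'I_N} -> 'I_N -> R) :
  (forall I, P I -> h I \subset A) ->
  \sum_(I : {set 'I_N} | P I) \sum_(r in h I) G I r =
  \sum_(r in A) \sum_(I | P I && (r \in h I)) G I r.
Proof.
move=> HA.
have -> : \sum_(I : {set 'I_N} | P I) \sum_(r in h I) G I r =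
          \sum_(I : {set 'I_N} | P I) \sum_(r in A) (if r \in h I then G I r else 0).
  apply: eq_bigr => I HI; rewrite -big_mkcondr; apply: eq_bigl => r.
  by case Hr: (r \in h I); rewrite ?andbT ?andbF // (subsetP (HA I HI)).
rewrite exchange_big; apply: eq_bigr => r _; by rewrite big_mkcondr.
Qed.
End Gen.

Section Core.
Variable L : fieldType.
Variable N : nat.
Variable t : L.
Variables y u : 'I_N -> L.
Hypothesis Hyinj : injective y.
Hypothesis Huinj : injective u.
Hypothesis Huy : forall i l, u l != y i.
Hypothesis Hy0 : forall i, y i != 0.
Hypothesis Hu0 : forall l, u l != 0.
Hypothesis Ht : forall k, (0 < k)%N -> t ^+ k != 1.

Local Notation f := (ff t).

Lemma f0 b : b != 0 -> f 0 b = t.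
Proof. by move=> Hb; rewrite /ff !sub0r invrN mulrNN mulfK. Qed.

Lemma fa0 a : a != 0 -> f a 0 = 1.
Proof. by move=> Ha; rewrite /ff mulr0 !subr0 divff. Qed.

Lemma fN a x : (t * x - a) / (x - a) = f a x.
Proof. by rewrite /ff -opprB -[x - a]opprB invrN mulrNN. Qed.

Lemma PFv (v : 'I_N -> L) (Hv : injective v) (I : {set 'I_N}) w :
  (forall i, i \in I -> w != v i) ->
  \prod_(i in I) f w (v i) =
  1 + \sum_(r in I) ((v r - t * v r) / (w - v r) * \prod_(i in I :\ r) f (v r) (v i)).
Proof.
move=> Hw.
have H := @PF L _ (fun _ => 1) (fun i => t * v i) v #|I| I w (erefl _) (in2W Hv) Hw.
rewrite prodr_const expr1n in H.
transitivity (\prod_(i in I) ((1 * w - t * v i) / (w - v i))).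
  by apply: eq_bigr => i _; rewrite mul1r.
rewrite H; congr (_ + _); apply: eq_bigr => r _; rewrite mul1r; congr (_ * _).
Qed.

Lemma PFmix (P S : {set 'I_N}) w :
  (forall j, j \in P -> w != u j) -> (forall i, i \in S -> w != y i) ->
  \prod_(j in P) f (u j) w * \prod_(i in S) f w (y i) =
  t ^+ #|P| + \sum_(j in P) ((t * u j - u j) / (w - u j) *
     (\prod_(j' in P :\ j) f (u j') (u j) * \prod_(i in S) f (u j) (y i)))
  + \sum_(r in S) ((y r - t * y r) / (w - y r) *
     (\prod_(j' in P) f (u j') (y r) * \prod_(i in S :\ r) f (y r) (y i))).
Proof.
move=> HP HS.
pose X := ('I_N + 'I_N)%type.
pose c (p : X) := match p with inl _ => t | inr _ => 1 end.
pose a (p : X) := match p with inl j => u j | inr i => t * y i end.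
pose b (p : X) := match p with inl j => u j | inr i => y i end.
pose Z := [set p : X | match p with inl j => j \in P | inr i => i \in S end].
have Hinj : {in Z &, injective b}.
  move=> [j|i] [j'|i'] _ _ /= E.
  - by rewrite (Huinj E).
  - by move: (Huy i' j); rewrite E eqxx.
  - by move: (Huy i j'); rewrite E eqxx.
  - by rewrite (Hyinj E).
have Hw : forall p, p \in Z -> w != b p.
  by move=> [j|i]; rewrite inE /=; [apply: HP | apply: HS].
have H := @PF L X c a b #|Z| Z w (erefl _) Hinj Hw.
have E1 : \prod_(p in Z) ((c p * w - a p) / (w - b p)) =
   \prod_(j in P) f (u j) w * \prod_(i in S) f w (y i).
  rewrite big_sumType; congr (_ * _); apply: eq_big => [j|j _]; rewrite ?inE //= ?fN ?mul1r //.
have E2 : \prod_(p in Z) c p = t ^+ #|P|.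
  rewrite big_sumType /= -[RHS]mulr1; congr (_ * _).
    rewrite -prodr_const; apply: eq_bigl => j; by rewrite inE.
  by rewrite big1.
rewrite -E1 H E2 big_sumType -addrA; congr (_ + _); congr (_ + _).
  apply: eq_big => [j | j Hj]; first by rewrite inE.
  rewrite /=; congr (_ * _); rewrite big_sumType; congr (_ * _);
    apply: eq_big => [j'|j' _]; rewrite ?inE /= ?fN ?mul1r //.
apply: eq_big => [j | j Hj]; first by rewrite inE.
rewrite /= mul1r; congr (_ * _); rewrite big_sumType; congr (_ * _);
  apply: eq_big => [j'|j' _]; rewrite ?inE /= ?fN ?mul1r //.
Qed.

Section Step.
Variables (S T : {set 'I_N}) (s : 'I_N) (k : nat).
Hypothesis Hs : s \in T.
Hypothesis HST : #|S| = #|T|.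
Local Notation T' := (T :\ s).
Hypothesis IH : forall r, r \in S -> Asum f y u k (S :\ r) T' = Bsum f y u k (S :\ r) T'.

Local Notation At := (Aterm f y u).
Local Notation Bt := (Bterm f y u).

Definition Aw w := \sum_(I : {set 'I_N} | (I \subset S) && (#|I| == k.+1))
   At S T' I * \prod_(i in I) f w (y i).
Definition B1w w := \sum_(M : {set 'I_N} | (M \subset T') && (#|M| == k.+1))
   Bt S T' M * \prod_(l in M) f w (u l).
Definition B2w w := \sum_(M : {set 'I_N} | (M \subset T') && (#|M| == k))
   Bt S T' M * (\prod_(j in T' :\: M) f (u j) w * \prod_(i in S) f w (y i)).
Definition Ainf := \sum_(I : {set 'I_N} | (I \subset S) && (#|I| == k.+1)) At S T' I.
Definition B1inf := \sum_(M : {set 'I_N} | (M \subset T') && (#|M| == k.+1)) Bt S T' M.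
Definition B2inf := \sum_(M : {set 'I_N} | (M \subset T') && (#|M| == k))
   Bt S T' M * t ^+ #|T' :\: M|.

Lemma D1 : Asum f y u k.+1 S T = Aw (u s).
Proof.
rewrite /Asum /Aw; apply: eq_bigr => I _; rewrite /Aterm -mulrA; congr (_ * _).
rewrite -big_split; apply: eq_bigr => i _ /=; by rewrite (big_setD1 s Hs) mulrC.
Qed.

Lemma D2 : Bsum f y u k.+1 S T = B1w (u s) + B2w (u s).
Proof.
rewrite /Bsum (bigID (fun M : {set 'I_N} => s \in M)) /= addrC; congr (_ + _).
  apply: eq_big => [M | M /andP[/andP[HMT _] HsM]].
    rewrite subsetD1.
    by case: (M \subset T); case: (s \in M); case: (#|M| == k.+1).
  rewrite /Bterm mulrAC; congr (_ * _); rewrite -big_split; apply: eq_bigr => l Hl /=.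
  have HsTM : s \in T :\: M by rewrite in_setD HsM Hs.
  rewrite (big_setD1 s HsTM) /= mulrC; congr (_ * _).
  apply: eq_bigl => j; rewrite !inE.
  by case: (j == s); case: (j \in M).
rewrite (sum_add1 _ _ Hs); apply: eq_bigr => J /andP[HJ _].
have HsJ : s \notin J by move: HJ; rewrite subsetD1 => /andP[].
rewrite /Bterm !big_setU1 //= -setDDl.
ring.
Qed.

Definition RA r := \sum_(I : {set 'I_N} | (I \subset S) && (#|I| == k.+1) && (r \in I))
   At S T' I * \prod_(i in I :\ r) f (y r) (y i).
Definition RB r := \sum_(M : {set 'I_N} | (M \subset T') && (#|M| == k) && (r \in S))
   Bt S T' M * (\prod_(j' in T' :\: M) f (u j') (y r) * \prod_(i in S :\ r) f (y r) (y i)).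
Definition Q1 j := \sum_(M : {set 'I_N} | (M \subset T') && (#|M| == k.+1) && (j \in M))
   Bt S T' M * \prod_(l in M :\ j) f (u j) (u l).
Definition Q2 j := \sum_(M : {set 'I_N} | (M \subset T') && (#|M| == k) && (j \in T' :\: M))
   Bt S T' M * (\prod_(j' in (T' :\: M) :\ j) f (u j') (u j) * \prod_(i in S) f (u j) (y i)).

Lemma XA w : (forall i, i \in S -> w != y i) ->
  Aw w = Ainf + \sum_(r in S) ((y r - t * y r) / (w - y r) * RA r).
Proof.
move=> HS.
transitivity (\sum_(I : {set 'I_N} | (I \subset S) && (#|I| == k.+1))
  (At S T' I + \sum_(r in I) At S T' I * ((y r - t * y r) / (w - y r) *
       \prod_(i in I :\ r) f (y r) (y i)))).
  apply: eq_bigr => I /andP[HI _]; rewrite PFv //.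
    by rewrite mulrDr mulr1 mulr_sumr.
  by move=> i Hi; apply: HS; apply: (subsetP HI).
rewrite big_split /=; congr (_ + _).
rewrite (exch (h := fun I => I) (A := S)); last by move=> I /andP[].
apply: eq_bigr => r _; rewrite /RA mulr_sumr; apply: eq_bigr => I _.
by rewrite mulrCA.
Qed.

Lemma XB1 w : (forall l, l \in T' -> w != u l) ->
  B1w w = B1inf + \sum_(j in T') ((u j - t * u j) / (w - u j) * Q1 j).
Proof.
move=> HT.
transitivity (\sum_(M : {set 'I_N} | (M \subset T') && (#|M| == k.+1))
  (Bt S T' M + \sum_(r in M) Bt S T' M * ((u r - t * u r) / (w - u r) *
       \prod_(i in M :\ r) f (u r) (u i)))).
  apply: eq_bigr => I /andP[HI _]; rewrite PFv //.
    by rewrite mulrDr mulr1 mulr_sumr.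
  by move=> i Hi; apply: HT; apply: (subsetP HI).
rewrite big_split /=; congr (_ + _).
rewrite (exch (h := fun I => I) (A := T')); last by move=> I /andP[].
apply: eq_bigr => r _; rewrite /Q1 mulr_sumr; apply: eq_bigr => I _.
by rewrite mulrCA.
Qed.

Lemma XB2 w : (forall l, l \in T' -> w != u l) -> (forall i, i \in S -> w != y i) ->
  B2w w = B2inf + \sum_(j in T') ((t * u j - u j) / (w - u j) * Q2 j)
             + \sum_(r in S) ((y r - t * y r) / (w - y r) * RB r).
Proof.
move=> HT HS.
transitivity (\sum_(M : {set 'I_N} | (M \subset T') && (#|M| == k))
  (Bt S T' M * t ^+ #|T' :\: M|
   + \sum_(j in T' :\: M) Bt S T' M * ((t * u j - u j) / (w - u j) *
     (\prod_(j' in (T' :\: M) :\ j) f (u j') (u j) * \prod_(i in S) f (u j) (y i)))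
   + \sum_(r in S) Bt S T' M * ((y r - t * y r) / (w - y r) *
     (\prod_(j' in T' :\: M) f (u j') (y r) * \prod_(i in S :\ r) f (y r) (y i))))).
  apply: eq_bigr => M /andP[HM _]; rewrite PFmix //.
    by rewrite !mulrDr !mulr_sumr.
  by move=> j; rewrite in_setD => /andP[_ Hj]; apply: HT.
rewrite !big_split /=; congr (_ + _ + _).
  rewrite (exch (h := fun M => T' :\: M) (A := T')); last by move=> M _; apply: subsetDl.
  apply: eq_bigr => r _; rewrite /Q2 mulr_sumr; apply: eq_bigr => I _.
  by rewrite mulrCA.
rewrite (exch (h := fun M => S) (A := S)) //.
apply: eq_bigr => r _; rewrite /RB mulr_sumr; apply: eq_bigr => I _.
by rewrite mulrCA.
Qed.

Definition Cr r := \prod_(j in S :\ r) f (y r) (y j) * \prod_(l in T') f (u l) (y r).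

Lemma RAE r : r \in S -> RA r = Cr r * Asum f y u k (S :\ r) T'.
Proof.
move=> Hr; rewrite /RA (sum_add1 _ _ Hr) /Asum mulr_sumr.
apply: eq_bigr => J /andP[HJ _].
have HrJ : r \notin J by move: HJ; rewrite subsetD1 => /andP[].
rewrite setU1K // /Aterm !big_setU1 //=.
have -> : S :\: (r |: J) = (S :\ r) :\: J by rewrite setDDl.
rewrite /Cr (big_setID (A := S :\ r) J) /= (setIidPr HJ).
idtac.
ring.
Qed.

Lemma RBE r : r \in S -> RB r = Cr r * Bsum f y u k (S :\ r) T'.
Proof.
move=> Hr; rewrite /RB /Bsum mulr_sumr.
apply: eq_big => [M | M /andP[/andP[HM _] _]]; first by rewrite Hr andbT.
rewrite /Bterm.
have -> : \prod_(l in M) \prod_(i in S) f (u l) (y i) =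
   \prod_(l in M) f (u l) (y r) * \prod_(l in M) \prod_(i in S :\ r) f (u l) (y i).
  by rewrite -big_split; apply: eq_bigr => l _; rewrite (big_setD1 r Hr).
rewrite /Cr (big_setID (A := T') M) /= (setIidPr HM).
ring.
Qed.

Lemma QE j : j \in T' -> Q1 j = Q2 j.
Proof.
move=> Hj; rewrite /Q1 /Q2 (sum_add1 _ _ Hj).
apply: eq_big => [M | M /andP[HM _]].
  rewrite subsetD1 in_setD Hj andbT.
  by case: (M \subset T'); case: (j \in M); case: (#|M| == k).
have HjM : j \notin M by move: HM; rewrite subsetD1 => /andP[].
have HjTM : j \in T' :\: M by rewrite in_setD HjM Hj.
rewrite setU1K // /Bterm !big_setU1 //=.
have -> : T' :\: (j |: M) = (T' :\: M) :\ j.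
  by apply/setP => x; rewrite !inE; case: (x == j); case: (x \in M); case: (x == s); case: (x \in T).
have -> : \prod_(l in M) \prod_(j0 in T' :\: M) f (u j0) (u l) =
   \prod_(l in M) f (u j) (u l) * \prod_(l in M) \prod_(j0 in (T' :\: M) :\ j) f (u j0) (u l).
  by rewrite -big_split; apply: eq_bigr => l _; rewrite (big_setD1 j HjTM).
ring.
Qed.

Lemma Const w : (forall i, i \in S -> w != y i) -> (forall l, l \in T' -> w != u l) ->
  Aw w - (B1w w + B2w w) = Ainf - (B1inf + B2inf).
Proof.
move=> HS HT.
rewrite (XA HS) (XB1 HT) (XB2 HT HS).
have ERS : \sum_(r in S) ((y r - t * y r) / (w - y r) * RA r) =
           \sum_(r in S) ((y r - t * y r) / (w - y r) * RB r).
  by apply: eq_bigr => r Hr; rewrite RAE // RBE // IH.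
have ERT : \sum_(j in T') ((t * u j - u j) / (w - u j) * Q2 j) =
         - \sum_(j in T') ((u j - t * u j) / (w - u j) * Q1 j).
  rewrite -sumrN; apply: eq_bigr => j Hj; rewrite QE //.
  by rewrite -opprB !mulNr.
rewrite ERS ERT.
ring.
Qed.

Lemma A0 : Aw 0 = t ^+ k.+1 * Ainf.
Proof.
rewrite /Aw /Ainf mulr_sumr; apply: eq_bigr => I /andP[_ /eqP HI].
rewrite (eq_bigr (fun _ => t)); last by move=> i _; apply: f0.
by rewrite prodr_const HI mulrC.
Qed.

Lemma B10 : B1w 0 = t ^+ k.+1 * B1inf.
Proof.
rewrite /B1w /B1inf mulr_sumr; apply: eq_bigr => I /andP[_ /eqP HI].
rewrite (eq_bigr (fun _ => t)); last by move=> i _; apply: f0.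
by rewrite prodr_const HI mulrC.
Qed.

Lemma B20 : B2w 0 = t ^+ k.+1 * B2inf.
Proof.
rewrite /B2w /B2inf mulr_sumr; apply: eq_bigr => M /andP[HM /eqP HMk].
rewrite (eq_bigr (fun _ => 1)); last by move=> i _; apply: fa0.
rewrite prodr_const expr1n mul1r.
rewrite (eq_bigr (fun _ => t)); last by move=> i _; apply: f0.
rewrite prodr_const mulrCA -exprD.
have H1 : #|T' :\: M| = (#|T'| - #|M|)%N by rewrite cardsD (setIidPr HM).
have H2 : #|T| = (#|T'|).+1 by rewrite (cardsD1 s T) Hs.
have H3 : (#|M| <= #|T'|)%N by apply: subset_leq_card.
rewrite H1 HST H2 HMk; congr (_ * (t ^+ _)).
move: H3; rewrite HMk; lia.
Qed.

Lemma StepE : Asum f y u k.+1 S T = Bsum f y u k.+1 S T.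
Proof.
have Hy0' : forall i, i \in S -> 0 != y i by move=> i _; rewrite eq_sym.
have Hu0' : forall l, l \in T' -> 0 != u l by move=> l _; rewrite eq_sym.
have C0 := Const Hy0' Hu0'.
rewrite A0 B10 B20 in C0.
have Hd : Ainf - (B1inf + B2inf) = 0.
  have : (t ^+ k.+1 - 1) * (Ainf - (B1inf + B2inf)) = 0.
    rewrite mulrBl mul1r; apply/eqP; rewrite subr_eq0; apply/eqP; rewrite -[RHS]C0; ring.
  by move/eqP; rewrite mulf_eq0 subr_eq0 (negbTE (Ht _)) //= => /eqP.
have Hys : forall i, i \in S -> u s != y i by move=> i _; apply: Huy.
have Hus : forall l, l \in T' -> u s != u l.
  move=> l /setD1P[Hl _]; apply/eqP => /Huinj E.
  by rewrite E eqxx in Hl.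
have Cs := Const Hys Hus.
rewrite D1 D2; apply/eqP; rewrite -subr_eq0 Cs Hd.
by [].
Qed.

End Step.

Lemma k0 S T : Asum f y u 0 S T = Bsum f y u 0 S T.
Proof.
have P0 : forall (A I : {set 'I_N}), ((I \subset A) && (#|I| == 0)) = (I == set0).
  by move=> A I; rewrite cards_eq0; case: eqP => [->|]; rewrite ?sub0set ?andbF.
rewrite /Asum /Bsum (big_pred1 set0) => [|I]; last by rewrite P0.
rewrite (big_pred1 set0) => [|I]; last by rewrite P0.
by rewrite /Aterm /Bterm !big_set0.
Qed.

Lemma core m : forall k (S T : {set 'I_N}), #|S| = m -> #|T| = m -> Asum f y u k S T = Bsum f y u k S T.
Proof.
elim: m => [|m IHm] [|k] S T HS HT; rewrite ?k0 //.
  rewrite /Asum /Bsum !big_pred0 // => I; apply/negbTE/negP => /andP[HI /eqP HIk].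
    by move: (subset_leq_card HI); rewrite HT HIk.
  by move: (subset_leq_card HI); rewrite HS HIk.
have : (0 < #|T|)%N by rewrite HT.
case/card_gt0P => s Hs.
apply: (StepE Hs); first by rewrite HS HT.
move=> r Hr; apply: IHm.
  by move: HS; rewrite (cardsD1 r) Hr => -[].
by move: HT; rewrite (cardsD1 s) Hs => -[].
Qed.

End Core.

Section Transfer.
Variables (R R' : comNzRingType) (V : Type) (N : nat).

Lemma Asum_ext (g1 g2 : V -> V -> R) (y u : 'I_N -> V) k S T :
  (forall a b, g1 a b = g2 a b) -> Asum g1 y u k S T = Asum g2 y u k S T.
Proof.
move=> E; rewrite /Asum; apply: eq_bigr => I _; rewrite /Aterm.
by congr (_ * _); apply: eq_bigr => i _; apply: eq_bigr => j _; rewrite E.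
Qed.

Lemma Bsum_ext (g1 g2 : V -> V -> R) (y u : 'I_N -> V) k S T :
  (forall a b, g1 a b = g2 a b) -> Bsum g1 y u k S T = Bsum g2 y u k S T.
Proof.
move=> E; rewrite /Bsum; apply: eq_bigr => I _; rewrite /Bterm.
by congr (_ * _); apply: eq_bigr => i _; apply: eq_bigr => j _; rewrite E.
Qed.

Lemma Asum_morph (phi : {rmorphism R -> R'}) (g : V -> V -> R) (y u : 'I_N -> V) k S T :
  phi (Asum g y u k S T) = Asum (fun a b => phi (g a b)) y u k S T.
Proof.
rewrite /Asum rmorph_sum; apply: eq_bigr => I _; rewrite /Aterm rmorphM !rmorph_prod.
by congr (_ * _); apply: eq_bigr => i _; rewrite rmorph_prod.
Qed.

Lemma Bsum_morph (phi : {rmorphism R -> R'}) (g : V -> V -> R) (y u : 'I_N -> V) k S T :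
  phi (Bsum g y u k S T) = Bsum (fun a b => phi (g a b)) y u k S T.
Proof.
rewrite /Bsum rmorph_sum; apply: eq_bigr => I _; rewrite /Bterm rmorphM !rmorph_prod.
by congr (_ * _); apply: eq_bigr => i _; rewrite rmorph_prod.
Qed.
End Transfer.

Section Final.
Variable F : fieldType.
Local Notation K := {fraction {poly F}}.

Definition gP (a b : F) : {poly F} := (a%:P - 'X * b%:P) * ((a - b)^-1)%:P.
Definition cK (a : F) : K := tofrac (a%:P).

Lemma cK_eq a b : (cK a == cK b) = (a == b).
Proof. by rewrite /cK tofrac_eq (inj_eq polyC_inj). Qed.

Lemma cK0 a : (cK a == 0) = (a == 0).
Proof. by rewrite /cK tofrac_eq0 polyC_eq0. Qed.

Lemma gP_horner t a b : (gP a b).[t] = ff t a b.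
Proof. by rewrite /gP /ff !hornerE. Qed.

Lemma gP_frac a b : tofrac (gP a b) = ff (tofrac 'X) (cK a) (cK b).
Proof.
rewrite /gP /ff /cK rmorphM rmorphB rmorphM.
case: (eqVneq a b) => [->|Hab].
  by rewrite subrr invr0 !subrr invr0 !mulr0.
congr (_ * _).
have Hc : tofrac ((a - b)%:P) != 0 by rewrite tofrac_eq0 polyC_eq0 subr_eq0.
have H : tofrac (((a - b)^-1)%:P) * tofrac ((a - b)%:P) = 1.
  by rewrite -rmorphM -polyCM mulVf ?subr_eq0 // rmorph1.
rewrite -rmorphB -polyCB; apply: (mulIf Hc); by rewrite H mulVf.
Qed.

Lemma transfer N (t : F) (y u : 'I_N -> F) k :
  injective y -> injective u -> (forall i l, u l != y i) ->
  (forall i, y i != 0) -> (forall l, u l != 0) ->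
  Asum (ff t) y u k setT setT = Bsum (ff t) y u k setT setT.
Proof.
move=> Hy Hu Huy Hy0 Hu0.
have EA : Asum (ff t) y u k setT setT = horner_eval t (Asum gP y u k setT setT).
  by rewrite Asum_morph; apply: Asum_ext => a b; exact: (esym (gP_horner t a b)).
have EB : Bsum (ff t) y u k setT setT = horner_eval t (Bsum gP y u k setT setT).
  by rewrite Bsum_morph; apply: Bsum_ext => a b; exact: (esym (gP_horner t a b)).
rewrite EA EB; congr (horner_eval t _).
apply/eqP; rewrite -tofrac_eq; apply/eqP.
rewrite Asum_morph Bsum_morph.
rewrite (Asum_ext _ _ _ _ _ gP_frac) (Bsum_ext _ _ _ _ _ gP_frac).
have cinj : injective cK by move=> a b /eqP; rewrite cK_eq => /eqP.
apply: (@core K N (tofrac 'X) (fun i => cK (y i)) (fun l => cK (u l))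
   _ _ _ _ _ _ N k setT setT).
- by move=> i j /cinj /Hy.
- by move=> i j /cinj /Hu.
- by move=> i l; rewrite cK_eq.
- by move=> i; rewrite cK0.
- by move=> l; rewrite cK0.
- move=> m Hm; rewrite -tofracXn -tofrac1 tofrac_eq; apply/eqP => E.
  have := size_polyXn F m; rewrite E size_poly1 => -[] Em; by rewrite -Em in Hm.
- by rewrite cardsT card_ord.
- by rewrite cardsT card_ord.
Qed.
End Final.


Theorem theorem2p2 (F : fieldType) (n k : nat) (q t : F) (x y : 'I_n -> F) :
  (1 <= k <= n)%N ->
  q != 0 ->
  (forall l, x l != 0) ->
  (forall i, y i != 0) ->
  (forall i j, i != j -> x i != x j) ->
  (forall i j, i != j -> y i != y j) ->
  (forall i l, y i != q * x l) ->
  @chi_X F n k q t x y = @chi_Xdual F n k q t x y.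
Proof.
move=> Hk Hq Hx0 Hy0 Hx Hy Hyq.
pose u := fun l => q * x l.
have EX : @chi_X F n k q t x y = Asum (ff t) y u k setT setT.
  rewrite /chi_X /Asum; apply: eq_big => [I|I _]; first by rewrite subsetT.
  rewrite /Aterm; congr (_ * _); apply: eq_bigr => i Hi.
    rewrite setTD; apply: eq_bigr => j Hj; rewrite /ff /u.
    have Hij : i != j by apply/eqP => E; move: Hj; rewrite inE -E Hi.
    have H1 : y i - y j != 0 by rewrite subr_eq0; apply: Hy.
    have H2 := Hy0 i.
    by fld.
  apply: eq_big => [l|l _]; first by rewrite in_setT.
  rewrite /ff /u.
  have H1 : q * x l - y i != 0 by rewrite subr_eq0 eq_sym.
  have H2 := Hx0 l.
  by fld.
have EY : @chi_Xdual F n k q t x y = Bsum (ff t) y u k setT setT.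
  rewrite /chi_Xdual /Bsum; apply: eq_big => [I|I _]; first by rewrite subsetT.
  rewrite /Bterm; congr (_ * _); apply: eq_bigr => i Hi; [rewrite setTD|].
    apply: eq_bigr => j Hj; rewrite /ff /u.
    have Hij : i != j by apply/eqP => E; move: Hj; rewrite inE -E Hi.
    have H1 : x j - x i != 0 by rewrite subr_eq0 eq_sym; apply: Hx.
    have H2 := Hx0 j.
    have H3 : q * x j - q * x i != 0 by rewrite -mulrBr mulf_neq0.
    by fld.
  apply: eq_big => [j|j _]; first by rewrite in_setT.
  rewrite /ff /u.
  have H1 : q * x i - y j != 0 by rewrite subr_eq0 eq_sym.
  have H2 := Hx0 i.
  by fld.
rewrite EX EY; apply: transfer.
- move=> i j E; apply/eqP; case: (eqVneq i j) => // /Hy; by rewrite E eqxx.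
- move=> i j E; apply/eqP; case: (eqVneq i j) => // /Hx.
  by rewrite /u in E; rewrite (mulfI Hq E) eqxx.
- by move=> i l; rewrite /u eq_sym; apply: Hyq.
- exact: Hy0.
- by move=> l; rewrite /u mulf_neq0.
Qed.
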